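(* Let $A\in\mathbb{R}^{n\times n}$, $B\in\mathbb{R}^{n\times m}$, $C\in\mathbb{R}^{p\times n}$ with $(A,C)$ observable and $(A,B)$ reachable, let $\ell$ be the observability index of $(A,C)$, and let $\mathbf{A}_\ell,\mathbf{B}_\ell,H_\ell$ be as in the context. Then $\operatorname{im}H_\ell=R(\mathbf{A}_\ell,\mathbf{B}_\ell)$.
   Context: The observability index $\ell$ of an observable pair $(A,C)$ is the smallest $l$ with $\operatorname{rank}[C;CA;\dots;CA^{l-1}]=n$. Define $\mathcal{O}_\ell=[C;CA;\dots;CA^{\ell-1}]\in\mathbb{R}^{p\ell\times n}$; $\mathcal{T}_\ell\in\mathbb{R}^{p\ell\times m\ell}$ block lower triangular with $(i,j)$ block ($i,j=1,\dots,\ell$) equal to $CA^{i-j-1}B$ if $i>j$ and $0$ otherwise; $\mathcal{R}_\ell=[A^{\ell-1}B\ \cdots\ AB\ B]$; $\mathcal{O}_\ell^{L}$ a fixed left inverse ($\mathcal{O}_\ell^L\mathcal{O}_\ell=I_n$). $\mathbf{F}_\ell=\mathrm{blockdiag}(S_p,S_m)$ where $S_q\in\mathbb{R}^{q\ell\times q\ell}$ has blocks $I_q$ in block positions $(i,i+1)$, $i=1,\dots,\ell-1$, zeros elsewhere; $\mathbf{L}_\ell\in\mathbb{R}^{(p\ell+m\ell)\times p}$ has $I_p$ in rows $p\ell-p+1,\dots,p\ell$, zeros elsewhere; $\mathbf{B}_\ell\in\mathbb{R}^{(p\ell+m\ell)\times m}$ has $I_m$ in its last $m$ rows, zeros elsewhere.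 $Z_\ell=[CA^\ell\mathcal{O}_\ell^L\ \ C\mathcal{R}_\ell-CA^\ell\mathcal{O}_\ell^L\mathcal{T}_\ell]$, $\mathbf{A}_\ell=\mathbf{F}_\ell+\mathbf{L}_\ell Z_\ell$. $H_\ell=\begin{bmatrix}\mathcal{O}_\ell&\mathcal{T}_\ell\\0&I_{m\ell}\end{bmatrix}$. For a pair $(M,N)$ with $M$ of size $q\times q$, $R(M,N)=\operatorname{im}[M^{q-1}N\ \cdots\ MN\ N]$ is its reachability subspace. *)

(* Defs.v *)
From HB Require Import structures.
From mathcomp Require Import all_boot all_order all_algebra.
Set Implicit Arguments. Unset Strict Implicit. Unset Printing Implicit Defensive.
Import Order.TTheory GRing.Theory Num.Theory.
Local Open Scope ring_scope.

(* Block indexing of 'I_(l*q): index i (0-based) lies in block i %/ q (0-based)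
   at offset i %% q within the block. *)
Definition blk (l q : nat) (i : 'I_(l * q)) : nat := (i %/ q)%N.

Lemma blk_off_proof (l q : nat) (i : 'I_(l * q)) : (i %% q < q)%N.
Proof.
case: q i => [|q] i; last by rewrite ltn_mod.
by case: i => i; rewrite muln0.
Qed.

Definition off (l q : nat) (i : 'I_(l * q)) : 'I_q := Ordinal (blk_off_proof i).

Section Defs.
Variable R : realFieldType.

(* O_l = [C; CA; ...; CA^(l-1)] *)
Definition obsv (l n p : nat) (A : 'M[R]_n) (C : 'M[R]_(p, n)) : 'M[R]_(l * p, n) :=
  \matrix_(i, j) (C *m A ^+ (blk i)) (off i) j.

(* T_l : block (i,j) (0-based) = C A^(i-j-1) B if i > j, else 0 *)
Definition toep (l n m p : nat) (A : 'M[R]_n) (B : 'M[R]_(n, m)) (C : 'M[R]_(p, n))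
  : 'M[R]_(l * p, l * m) :=
  \matrix_(i, j) (if (blk j < blk i)%N
                  then (C *m A ^+ (blk i - blk j - 1) *m B) (off i) (off j)
                  else 0).

(* R_l = [A^(l-1) B ... A B  B] : block j (0-based) = A^(l-1-j) B.
   Also used for the reachability matrix [M^(q-1) N ... M N N]. *)
Definition reachmx (l n m : nat) (A : 'M[R]_n) (B : 'M[R]_(n, m)) : 'M[R]_(n, l * m) :=
  \matrix_(i, j) (A ^+ (l - 1 - blk j) *m B) i (off j).

Definition shiftmx (l q : nat) : 'M[R]_(l * q) :=
  \matrix_(i, j) ((blk j == (blk i).+1) && (off i == off j))%:R.

Definition lastblk (l q : nat) : 'M[R]_(l * q, q) :=
  \matrix_(i, j) ((blk i == l.-1) && (off i == j))%:R.

Definition Fmx (l p m : nat) : 'M[R]_(l * p + l * m) :=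
  block_mx (shiftmx l p) 0 0 (shiftmx l m).

Definition Lmx (l p m : nat) : 'M[R]_(l * p + l * m, p) := col_mx (lastblk l p) 0.

Definition Bmx (l p m : nat) : 'M[R]_(l * p + l * m, m) := col_mx 0 (lastblk l m).

Definition Zmx (l n m p : nat) (A : 'M[R]_n) (B : 'M[R]_(n, m)) (C : 'M[R]_(p, n))
  (OL : 'M[R]_(n, l * p)) : 'M[R]_(p, l * p + l * m) :=
  row_mx (C *m A ^+ l *m OL)
         (C *m reachmx l A B - C *m A ^+ l *m OL *m toep l A B C).

Definition Amx (l n m p : nat) (A : 'M[R]_n) (B : 'M[R]_(n, m)) (C : 'M[R]_(p, n))
  (OL : 'M[R]_(n, l * p)) : 'M[R]_(l * p + l * m) :=
  Fmx l p m + Lmx l p m *m Zmx A B C OL.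

Definition Hmx (l n m p : nat) (A : 'M[R]_n) (B : 'M[R]_(n, m)) (C : 'M[R]_(p, n))
  : 'M[R]_(l * p + l * m, n + l * m) :=
  block_mx (obsv l A C) (toep l A B C) 0 1%:M.

(* column space (image) of X, as the row space of X^T *)
Definition same_image (k a b : nat) (X : 'M[R]_(k, a)) (Y : 'M[R]_(k, b)) : bool :=
  (X^T == Y^T)%MS.

(* reachability subspace R(M,N) = im [M^(q-1)N ... MN N], M : q x q *)
Definition im_eq_reach (k a m : nat) (X : 'M[R]_(k, a)) (M : 'M[R]_k) (N : 'M[R]_(k, m)) : bool :=
  same_image X (reachmx k M N).

Definition observable (n p : nat) (A : 'M[R]_n) (C : 'M[R]_(p, n)) : Prop :=
  \rank (obsv n A C) = n.

Definition reachable (n m : nat) (A : 'M[R]_n) (B : 'M[R]_(n, m)) : Prop :=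
  \rank (reachmx n A B) = n.

Definition is_obs_index (n p : nat) (A : 'M[R]_n) (C : 'M[R]_(p, n)) (l : nat) : Prop :=
  \rank (obsv l A C) = n /\ forall k, (k < l)%N -> \rank (obsv k A C) <> n.

End Defs.

(* Main.v *)
Require Import Defs.
From HB Require Import structures.
From mathcomp Require Import all_boot all_order all_algebra.
From mathcomp Require Import zify.
Set Implicit Arguments. Unset Strict Implicit. Unset Printing Implicit Defensive.
Import Order.TTheory GRing.Theory Num.Theory.
Local Open Scope ring_scope.

Lemma blk_lt (l q : nat) (i : 'I_(l * q)) : (blk i < l)%N.
Proof.
case: q i => [|q] i; first by have := ltn_ord i; lia.
by rewrite /blk ltn_divLR.
Qed.

Lemma offE (l q : nat) (i : 'I_(l * q)) : nat_of_ord (off i) = (i %% q)%N.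
Proof. by []. Qed.

Lemma blk_off_inj (l q : nat) (i j : 'I_(l * q)) :
  blk i = blk j -> off i = off j -> i = j.
Proof.
move=> h1 h2; apply/val_inj => /=.
have h3 : (i %% q = j %% q)%N by have := congr1 val h2.
by rewrite (divn_eq i q) (divn_eq j q) h3; move: h1; rewrite /blk => ->.
Qed.

Lemma exists_blk (l q a : nat) (r : 'I_q) : (a < l)%N ->
  exists k : 'I_(l * q), blk k = a /\ off k = r.
Proof.
move=> ha; have hq : (0 < q)%N by apply: leq_ltn_trans (ltn_ord r).
have hk : (a * q + r < l * q)%N by have := ltn_ord r; nia.
exists (Ordinal hk); split.
  by rewrite /blk /= divnMDl // divn_small // addn0.
by apply/val_inj; rewrite /= modnMDl modn_small.
Qed.

Section S.
Variable R : realFieldType.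

Lemma sum_blk (l q a : nat) (r : 'I_q) (G : nat -> 'I_q -> R) :
  \sum_(k : 'I_(l * q)) ((blk k == a) && (off k == r))%:R * G (blk k) (off k)
  = if (a < l)%N then G a r else 0.
Proof.
case: ifP => ha.
  have [k0 [h1 h2]] := exists_blk r ha.
  rewrite (bigD1 k0) //= h1 h2 !eqxx mul1r big1 ?addr0 // => k hk.
  case: eqP => e1; case: eqP => e2 /=; rewrite ?mul0r //.
  by case/negP: hk; apply/eqP; apply: blk_off_inj; rewrite ?e1 ?e2.
rewrite big1 // => k _; case: eqP => e /=; rewrite ?mul0r //.
by have := blk_lt k; rewrite e ha.
Qed.


Definition Eb (l q c : nat) : 'M[R]_(l * q, q) :=
  \matrix_(i, j) ((blk i == c) && (off i == j))%:R.

Lemma lastblkE l q : lastblk R l q = Eb l q l.-1.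
Proof. by apply/matrixP => i j; rewrite !mxE. Qed.

Lemma sum_delta (q : nat) (r : 'I_q) (F : 'I_q -> R) :
  \sum_(s < q) (r == s)%:R * F s = F r.
Proof.
rewrite (bigD1 r) //= eqxx mul1r big1 ?addr0 // => s hs.
by rewrite eq_sym (negbTE hs) mul0r.
Qed.

Lemma mul_shift_l l q c (X : 'M[R]_(l * q, c)) (G : nat -> 'I_q -> 'I_c -> R) :
  (forall k j, X k j = G (blk k) (off k) j) -> forall i j,
  (shiftmx R l q *m X) i j = if ((blk i).+1 < l)%N then G (blk i).+1 (off i) j else 0.
Proof.
move=> hX i j; rewrite mxE -(@sum_blk l q (blk i).+1 (off i) (fun a r => G a r j)).
by apply: eq_bigr => k _; rewrite mxE hX (eq_sym (off i)).
Qed.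

Lemma mul_shift_r l q c (X : 'M[R]_(c, l * q)) (G : 'I_c -> nat -> 'I_q -> R) :
  (forall i k, X i k = G i (blk k) (off k)) -> forall i j,
  (X *m shiftmx R l q) i j = if (0 < blk j)%N then G i (blk j).-1 (off j) else 0.
Proof.
move=> hX i j; rewrite mxE.
rewrite (eq_bigr (fun k => ((blk k == (blk j).-1) && (off k == off j))%:R *
   ((0 < blk j)%N%:R * G i (blk k) (off k)))); last first.
  move=> k _; rewrite mxE hX.
  case: (blk j) => [|b] /=; first by rewrite !(mulr0, mul0r, andbF).
  by rewrite mul1r eqSS mulrC (eq_sym b).
rewrite (@sum_blk l q (blk j).-1 (off j) (fun a r => (0 < blk j)%N%:R * G i a r)).
have -> : ((blk j).-1 < l)%N.
  by apply: leq_ltn_trans (leq_pred _) (blk_lt j).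
by case: (0 < blk j)%N; rewrite ?mul1r ?mul0r.
Qed.

Lemma mul_Eb_l l q c' a (Y : 'M[R]_(q, c')) i j :
  (Eb l q a *m Y) i j = if blk i == a then Y (off i) j else 0.
Proof.
rewrite mxE; under eq_bigr => s _ do rewrite mxE.
case: (blk i == a) => /=; first exact: sum_delta.
by rewrite big1 // => s _; rewrite mul0r.
Qed.

Lemma mul_EbT_r l q c' a (X : 'M[R]_(c', q)) i j :
  (X *m (Eb l q a)^T) i j = if blk j == a then X i (off j) else 0.
Proof.
rewrite mxE; under eq_bigr => s _ do rewrite !mxE.
case: (blk j == a) => /=.
  by rewrite -(sum_delta (off j) (fun s => X i s)); apply: eq_bigr => s _; rewrite mulrC.
by rewrite big1 // => s _; rewrite mulr0.
Qed.


Lemma obsv_mulr l n p c (A : 'M[R]_n) (C : 'M[R]_(p, n)) (X : 'M[R]_(n, c)) i j :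
  (obsv l A C *m X) i j = (C *m A ^+ blk i *m X) (off i) j.
Proof. by rewrite !mxE; apply: eq_bigr => k _; rewrite mxE. Qed.

Lemma C_reach l n m p (A : 'M[R]_n) (B : 'M[R]_(n, m)) (C : 'M[R]_(p, n)) i j :
  (C *m reachmx l A B) i j = (C *m A ^+ (l - 1 - blk j) *m B) i (off j).
Proof. by rewrite -mulmxA !mxE; apply: eq_bigr => k _; rewrite mxE. Qed.

Lemma I1 l n p (A : 'M[R]_n) (C : 'M[R]_(p, n)) :
  shiftmx R l p *m obsv l A C + lastblk R l p *m (C *m A ^+ l) = obsv l A C *m A.
Proof.
apply/matrixP => i j; rewrite mxE obsv_mulr lastblkE mul_Eb_l.
rewrite (@mul_shift_l l p n _ (fun a r j => (C *m A ^+ a) r j)); last by move=> k j'; rewrite mxE.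
rewrite exprSr -mulmxE mulmxA.
have h2 := blk_lt i; case: (ltnP (blk i).+1 l) => h1.
  have -> : (blk i == l.-1) = false by apply/negP => /eqP; lia.
  by rewrite addr0.
have e : blk i = l.-1 by lia.
have hA : A ^+ (blk i) *m A = A ^+ l.
  by rewrite mulmxE -exprSr; congr (A ^+ _); lia.
by rewrite e eqxx add0r -e -mulmxA hA.
Qed.


Lemma I2 l n m p (A : 'M[R]_n) (B : 'M[R]_(n, m)) (C : 'M[R]_(p, n)) :
  shiftmx R l p *m toep l A B C + lastblk R l p *m (C *m reachmx l A B)
  = obsv l A C *m (B *m (Eb l m 0)^T) + toep l A B C *m shiftmx R l m.
Proof.
apply/matrixP => i j; rewrite mxE [RHS]mxE lastblkE mul_Eb_l C_reach.
rewrite (@mul_shift_l l p _ _ (fun a r j => if (blk j < a)%N then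
   (C *m A ^+ (a - blk j - 1) *m B) r (off j) else 0)); last by move=> k j'; rewrite mxE.
rewrite mulmxA mul_EbT_r obsv_mulr.
rewrite (@mul_shift_r l m _ _ (fun i a r => if (a < blk i)%N then
   (C *m A ^+ (blk i - a - 1) *m B) (off i) r else 0)); last by move=> i' k; rewrite mxE.
have := blk_lt i; have := blk_lt j.
move: (blk i) (blk j) => a b ha hb.
have hM : forall e1 e2, e1 = e2 -> (C *m A ^+ e1 *m B) (off i) (off j) = (C *m A ^+ e2 *m B) (off i) (off j).
  by move=> ? ? ->.
repeat case: ifP => ?; rewrite ?addr0 ?add0r.
all: try by [].
all: try by (apply: hM; lia).
all: try by (exfalso; lia).
Qed.


Lemma mul_Eb_r l q c a (X : 'M[R]_(c, l * q)) (G : 'I_c -> nat -> 'I_q -> R) :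
  (forall i k, X i k = G i (blk k) (off k)) -> forall i j,
  (X *m Eb l q a) i j = if (a < l)%N then G i a j else 0.
Proof.
move=> hX i j; rewrite mxE -(@sum_blk l q a j (G i)).
by apply: eq_bigr => k _; rewrite mxE hX mulrC.
Qed.

Lemma T_last l n m p (A : 'M[R]_n) (B : 'M[R]_(n, m)) (C : 'M[R]_(p, n)) :
  toep l A B C *m lastblk R l m = 0.
Proof.
apply/matrixP => i j; rewrite [RHS]mxE lastblkE.
rewrite (@mul_Eb_r l m (l * p) l.-1 (toep l A B C) (fun (i : 'I_(l * p)) a r => if (a < blk i)%N then
   (C *m A ^+ (blk i - a - 1) *m B) (off i) r else 0)); last by move=> i' k; rewrite mxE.
have := blk_lt i; case: ifP => // _ h; case: ifP => // h'; lia.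
Qed.

Lemma E0T_Eb l q c : (c < l)%N ->
  (Eb l q 0)^T *m Eb l q c = ((c == 0%N)%:R)%:M :> 'M[R]_q.
Proof.
move=> hc; apply/matrixP => r s.
rewrite (@mul_Eb_r l q _ _ _ (fun r a s' => ((a == 0%N) && (s' == r))%:R)); last first.
  by move=> r' k; rewrite !mxE.
rewrite hc !mxE; case: (c == 0%N); rewrite /= ?mulr1n ?mul0rn //.
by rewrite eq_sym.
Qed.

Lemma shift_Eb l q c : (c < l)%N ->
  shiftmx R l q *m Eb l q c = if c == 0%N then 0 else Eb l q c.-1.
Proof.
move=> hc; apply/matrixP => i j.
rewrite (@mul_shift_l l q _ _ (fun a r j => ((a == c) && (r == j))%:R)); last first.
  by move=> k j'; rewrite mxE.
have := blk_lt i; case: (ltnP (blk i).+1 l) => h1 h2; case: (c =P 0%N) => hc0; rewrite ?mxE //.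
- by rewrite hc0.
- by rewrite (_ : ((blk i).+1 == c) = (blk i == c.-1)) //; apply/eqP/eqP; lia.
- by rewrite (_ : (blk i == c.-1) = false) //; apply/negP => /eqP; lia.
Qed.


Definition At l n m (A : 'M[R]_n) (B : 'M[R]_(n, m)) : 'M[R]_(n + l * m) :=
  block_mx A (B *m (Eb l m 0)^T) 0 (shiftmx R l m).

Definition Bt l n m : 'M[R]_(n + l * m, m) := col_mx 0 (Eb l m l.-1).

Lemma Key1 l n m p (A : 'M[R]_n) (B : 'M[R]_(n, m)) (C : 'M[R]_(p, n))
  (OL : 'M[R]_(n, l * p)) : OL *m obsv l A C = 1%:M ->
  Amx A B C OL *m Hmx l A B C = Hmx l A B C *m At l A B.
Proof.
move=> hOL.
rewrite /Amx /Fmx /Lmx /Zmx /Hmx /At mul_col_row !mul0mx add_block_mx !addr0.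
rewrite !mulmx_block !mulmx0 !mul0mx !addr0 !add0r !mulmx1 !mul1mx.
congr block_mx.
  by rewrite mulmxDl -!mulmxA hOL mulmx1; exact: I1.
rewrite mulmxDl mulmxBr !mulmxA [_ - _]addrC addrA addrK -mulmxA -[_ *m B *m _]mulmxA; exact: I2.
Qed.

Lemma Key2 l n m p (A : 'M[R]_n) (B : 'M[R]_(n, m)) (C : 'M[R]_(p, n)) :
  Bmx R l p m = Hmx l A B C *m Bt l n m.
Proof.
rewrite /Bmx /Hmx /Bt mul_block_col !mulmx0 !add0r mul1mx -lastblkE T_last.
by [].
Qed.

Lemma Key3 l n m p (A : 'M[R]_n) (B : 'M[R]_(n, m)) (C : 'M[R]_(p, n))
  (OL : 'M[R]_(n, l * p)) : OL *m obsv l A C = 1%:M -> forall k,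
  Amx A B C OL ^+ k *m Hmx l A B C = Hmx l A B C *m At l A B ^+ k.
Proof.
move=> hOL; elim=> [|k IH]; first by rewrite !expr0 mul1mx mulmx1.
by rewrite !exprS -!mulmxE -mulmxA IH mulmxA Key1 // mulmxA.
Qed.


Lemma Key4 l n m p (A : 'M[R]_n) (B : 'M[R]_(n, m)) (C : 'M[R]_(p, n))
  (OL : 'M[R]_(n, l * p)) (N : nat) : OL *m obsv l A C = 1%:M ->
  reachmx N (Amx A B C OL) (Bmx R l p m) = Hmx l A B C *m reachmx N (At l A B) (Bt l n m).
Proof.
move=> hOL; apply/matrixP => i j.
rewrite mxE (@Key2 l n m p A B C) mulmxA Key3 // -mulmxA [LHS]mxE [RHS]mxE.
by apply: eq_bigr => k _; rewrite [reachmx _ _ _ _ _]mxE.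
Qed.

Lemma At_col l n m (A : 'M[R]_n) (B : 'M[R]_(n, m)) (X : 'M[R]_(n, m)) c :
  (c < l)%N ->
  At l A B *m col_mx X (Eb l m c) =
  col_mx (A *m X + (if c == 0%N then B else 0)) (if c == 0%N then 0 else Eb l m c.-1).
Proof.
move=> hc; rewrite /At mul_block_col mul0mx add0r -mulmxA E0T_Eb // shift_Eb //.
by rewrite mul_mx_scalar; case: (c == 0%N); rewrite ?mulr1n ?mulr0n ?scale1r ?scale0r.
Qed.

Lemma P1 l n m (A : 'M[R]_n) (B : 'M[R]_(n, m)) j : (j < l)%N ->
  At l A B ^+ j *m Bt l n m = col_mx 0 (Eb l m (l.-1 - j)).
Proof.
elim: j => [|j IH] hj; first by rewrite expr0 mul1mx subn0.
rewrite exprS -mulmxE -mulmxA IH; last by lia.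
rewrite At_col; last by lia.
have -> : ((l.-1 - j)%N == 0%N) = false by apply/negP => /eqP; lia.
by rewrite mulmx0 addr0; congr (col_mx _ (Eb _ _ _)); lia.
Qed.

Lemma P2 l n m (A : 'M[R]_n) (B : 'M[R]_(n, m)) k : (0 < l)%N ->
  At l A B ^+ (l + k) *m Bt l n m = col_mx (A ^+ k *m B) 0.
Proof.
move=> hl; elim: k => [|k IH].
  rewrite addn0 -(prednK hl) exprS -mulmxE -mulmxA P1 ?prednK // subnn At_col //.
  by rewrite eqxx mulmx0 add0r expr0 mul1mx.
rewrite addnS exprS -mulmxE -mulmxA IH /At mul_block_col !mulmx0 !addr0 mul0mx.
by rewrite mulmxA mulmxE -exprS.
Qed.

End S.

Theorem lemma1 (R : realFieldType) (n m p : nat)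
  (A : 'M[R]_n) (B : 'M[R]_(n, m)) (C : 'M[R]_(p, n)) (l : nat)
  (OL : 'M[R]_(n, l * p)) :
  observable A C -> reachable A B -> is_obs_index A C l ->
  OL *m obsv l A C = 1%:M ->
  im_eq_reach (Hmx l A B C) (Amx A B C OL) (Bmx R l p m).
Proof.
move=> _ hreach [hobs _] hOL.
have hnl : (n <= l * p)%N by rewrite -hobs rank_leq_row.
rewrite /im_eq_reach /same_image Key4 // trmx_mul.
set Rt := reachmx _ (At l A B) (Bt R l n m).
have h1 : (1%:M <= Rt^T)%MS.
  rewrite (scalar_mx_block n (l * m) 1) col_mx_sub; apply/andP; split.
    have full : (1%:M <= (reachmx n A B)^T)%MS.
      by rewrite sub1mx /row_full mxrank_tr hreach.
    have [D hD] := submxP full.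
    rewrite hD (_ : row_mx (D *m _) 0 = D *m row_mx (reachmx n A B)^T 0); last first.
      by rewrite mul_mx_row mulmx0.
    apply: submx_trans (submxMl _ _) _.
    apply/row_subP => j'.
    have hnm := ltn_ord j'.
    have hb := blk_lt j'.
    have : (0 < n * m)%N by apply: leq_ltn_trans hnm.
    rewrite muln_gt0 => /andP [hn hm].
    have hlm : (l <= l * m)%N by rewrite leq_pmulr.
    have ht : (l * p + l * m - 1 - (l + (n - 1 - blk j')) < l * p + l * m)%N by lia.
    have [j [hj1 hj2]] := @exists_blk (l * p + l * m) m _ (off j') ht.
    suff -> : row j' (row_mx (reachmx n A B)^T 0) = row j Rt^T by exact: row_sub.
    apply/matrixP => x y; rewrite [LHS]mxE [RHS]mxE [RHS]mxE [RHS]mxE hj1 hj2.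
    have -> : (l * p + l * m - 1 - (l * p + l * m - 1 - (l + (n - 1 - blk j'))) = l + (n - 1 - blk j'))%N by lia.
    rewrite P2; last by lia.
    by rewrite [LHS]mxE [RHS]mxE -(splitK y); case: (split y) => yy; rewrite !unsplitK !mxE.
  apply/row_subP => k.
  have hlm := ltn_ord k.
  have hc := blk_lt k.
  have : (0 < l * m)%N by apply: leq_ltn_trans hlm.
  rewrite muln_gt0 => /andP [hl hm].
  have hlm' : (l <= l * m)%N by rewrite leq_pmulr.
  have ht : (l * p + l * m - 1 - (l.-1 - blk k) < l * p + l * m)%N by lia.
  have [j [hj1 hj2]] := @exists_blk (l * p + l * m) m _ (off k) ht.
  suff -> : row k (row_mx 0 1%:M) = row j Rt^T by exact: row_sub.
  apply/matrixP => x y; rewrite [LHS]mxE [RHS]mxE [RHS]mxE [RHS]mxE hj1 hj2.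
  have -> : (l * p + l * m - 1 - (l * p + l * m - 1 - (l.-1 - blk k)) = l.-1 - blk k)%N by lia.
  rewrite P1; last by lia.
  have -> : (l.-1 - (l.-1 - blk k) = blk k)%N by lia.
  rewrite [LHS]mxE [RHS]mxE -(splitK y); case: (split y) => yy; rewrite !unsplitK !mxE //.
  congr (_%:R); congr (nat_of_bool _); apply/idP/andP => [/eqP ->|[/eqP e1 /eqP e2]]; first by rewrite !eqxx.
  by apply/eqP; apply: blk_off_inj.
apply/andP; split; last exact: submxMl.
by rewrite -{1}(mul1mx (Hmx l A B C)^T); apply: submxMr.
Qed.
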